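(* Let $n\ge1$ and let $d$ be an $n$-dimension vector, and let $k_{n,d}(z)\in\mathbb{Z}[z]$ be the polynomial with $k_{n,d}(q)=k(\mathrm{P}_{n,d}(q),\mathrm{GL}_n(q))$ for all prime powers $q$. Then $z-1$ divides $k_{n,d}(z)$ in $\mathbb{Z}[z]$.
   Context: An $n$-dimension vector is a tuple $d=(d_1,\dots,d_t)$ of positive integers with $d_i<d_{i+1}$ and $d_t=n$; $\mathrm{P}_{n,d}(q)$ is the stabilizer in $\mathrm{GL}_n(q)$ of the standard flag $\{0\}\subset\mathbb{F}_q^{d_1}\subset\cdots\subset\mathbb{F}_q^{d_t}=\mathbb{F}_q^n$. $k(P,G)$ denotes the number of orbits of $P$ acting on $G$ by conjugation. *)

(* Defs.v *)
From HB Require Import structures.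
From mathcomp Require Import all_boot all_order all_algebra all_fingroup all_field.
Set Implicit Arguments. Unset Strict Implicit. Unset Printing Implicit Defensive.
Import GRing.Theory.
Local Open Scope ring_scope.

Definition dim_vector (n : nat) (d : seq nat) : bool :=
  [&& d != [::], sorted ltn d, all (fun x => 0 < x)%N d & last 0%N d == n].

Definition GLset (F : finFieldType) (n : nat) : {set 'M[F]_n} :=
  [set A : 'M[F]_n | A \in unitmx].

(* The standard flag: F^{d_i} is the row space of pid_mx d_i (spanned by the
   first d_i standard basis row vectors); matrices act on row vectors
   v |-> v *m g (MathComp convention). *)
Definition Pset (F : finFieldType) (n : nat) (d : seq nat) : {set 'M[F]_n} :=
  [set g in GLset F n | all (fun di => (pid_mx di *m g == pid_mx di :> 'M[F]_n)%MS) d].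

Definition conjmx (F : finFieldType) (n : nat) (A g : 'M[F]_n) : 'M[F]_n :=
  invmx g *m A *m g.

Definition conj_orbit (F : finFieldType) (n : nat) (P : {set 'M[F]_n}) (A : 'M[F]_n)
  : {set 'M[F]_n} := [set conjmx A g | g in P].

Definition kPG (F : finFieldType) (n : nat) (P G : {set 'M[F]_n}) : nat :=
  #|[set conj_orbit P A | A in G]|.

Definition k_nd (F : finFieldType) (n : nat) (d : seq nat) : nat :=
  kPG (Pset F n d) (GLset F n).

(* Main.v *)
Require Import Defs.
From HB Require Import structures.
From mathcomp Require Import all_boot all_order all_algebra all_fingroup all_solvable all_field.
Set Implicit Arguments. Unset Strict Implicit. Unset Printing Implicit Defensive.
Import GRing.Theory FinRing.Theory.
Local Open Scope ring_scope.

Section Act.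
Variables (F : finFieldType) (n : nat).
Definition sact (S : {set 'M[F]_n}) (u : {unit F}) : {set 'M[F]_n} :=
  [set (val u) *: A | A in S].
Lemma sact1 : sact^~ 1%g =1 id.
Proof. by move=> S; rewrite /sact -[RHS]imset_id; apply: eq_imset => A /=; rewrite scale1r. Qed.
Lemma sactM : forall S, act_morph sact S.
Proof.
move=> S a b; rewrite /sact -imset_comp; apply: eq_imset => A /=.
by rewrite scalerA mulrC.
Qed.
Definition sAct := TotalAction sact1 sactM.

Lemma conjmxZ (A g : 'M[F]_n) c : Defs.conjmx (c *: A) g = c *: Defs.conjmx A g.
Proof. by rewrite /Defs.conjmx -scalemxAr -scalemxAl. Qed.

Lemma sact_orbit P A u : sact (conj_orbit P A) u = conj_orbit P (val u *: A).
Proof.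
rewrite /sact /conj_orbit -imset_comp; apply: eq_imset => g /=.
by rewrite conjmxZ.
Qed.

Lemma key (l : nat) : prime l -> (0 < n)%N -> (n < l)%N -> (l %| #|F|.-1)%N ->
  forall d, (l %| k_nd F n d)%N.
Proof.
move=> pl n0 nl ldv d.
rewrite -card_finField_unit in ldv.
have [u _ ou] := Cauchy pl ldv.
set X := [set conj_orbit (Pset F n d) A | A in GLset F n].
have pH : (l.-group <[u]>)%g by rewrite /pgroup /= -orderE ou pnat_id.
have actsX : [acts <[u]>%G, on X | sAct].
  apply/subsetP => v _; rewrite !inE /=; apply/subsetP => O /imsetP[A AG ->].
  rewrite inE /= sact_orbit; apply/imsetP; exists (val v *: A) => //.
  move: AG; rewrite !inE unitmxZ //; exact: (valP v).
have := pgroup_fix_mod pH actsX.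
have -> : ('Fix_(X | sAct)(<[u]>%G))%g = set0.
  apply/setP => O; rewrite inE [RHS]inE; apply/negP => /andP[/imsetP[A AG ->]].
  move/afixP => /(_ u (cycle_id u)) /=.
  rewrite sact_orbit => E.
  have : val u *: A \in conj_orbit (Pset F n d) (val u *: A).
    by apply/imsetP; exists 1%:M; [rewrite !inE unitmx1; apply/allP => x _; by rewrite mulmx1 | rewrite /Defs.conjmx invmx1 mul1mx mulmx1].
  rewrite E => /imsetP[g]; rewrite !inE => /andP[gU _] /(congr1 determinant).
  rewrite detZ /Defs.conjmx !det_mulmx det_inv mulrAC mulVr -?unitmxE // mul1r.
  move: AG; rewrite !inE unitmxE => Au.
  rewrite -{2}(mul1r (\det A)) => /(mulIr Au) un.
  have : (#[u]%g %| n)%N.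
    rewrite order_dvdn; apply/eqP/val_inj => /=.
    by rewrite val_unitX un.
  by rewrite ou => /dvdn_leq => /(_ n0); rewrite leqNgt nl.
by rewrite cards0 mod0n /k_nd /kPG -/X => H; rewrite /dvdn H.
Qed.
End Act.
Theorem mainTheorem5 (n : nat) (d : seq nat) (kz : {poly int}) :
  (0 < n)%N -> dim_vector n d ->
  (forall F : finFieldType, kz.[(#|F|%:Z)] = (k_nd F n d)%:Z) ->
  exists r : {poly int}, kz = r * ('X - 1).
Proof.
move=> n0 dv H.
suff c0 : kz.[1] = 0.
  have /factor_theorem [r ->] : root kz 1 by rewrite /root c0.
  by exists r; rewrite polyC1.
apply/eqP; apply: contraT => c0.
set c := kz.[1] in c0.
have [l ll pl] := prime_above (maxn 2 (maxn n `|c|%N)).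
rewrite !gtn_max in ll; case/and3P: ll => l2 nl cl.
have e : l = (l.-1).+1 by rewrite prednK // prime_gt0.
have l1 : (l %| 2 ^ l.-1 - 1)%N.
  have := fermat_little 2 pl; rewrite {1}e expnS => /eqP.
  rewrite -[X in _ == X %[mod _]](muln1 2) eqn_mod_dvd ?leq_mul2l ?expn_gt0 // -mulnBr Gauss_dvdr //.
  rewrite prime_coprime //; apply/negP => /dvdn_leq.
  by move=> /(_ isT); rewrite leqNgt l2.
have lp : (0 < l.-1)%N by rewrite -ltnS -e prime_gt1.
have [F _ cF] := @pPrimePowerField 2 l.-1 isT lp.
have ld : (l %| #|F|.-1)%N by move: l1; rewrite subn1 -cF.
have kd := @key F n l pl n0 nl ld d.
have HF := H F; rewrite cF in HF.
have /factor_theorem [r hr] : root (kz - c%:P) 1.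
  by rewrite /root hornerD hornerN hornerC subrr.
have : kz.[(2 ^ l.-1)%N%:Z] = r.[(2 ^ l.-1)%N%:Z] * ((2 ^ l.-1)%N%:Z - 1) + c.
  by rewrite -[kz](subrK c%:P) hr hornerD hornerM hornerXsubC hornerC.
rewrite HF => /eqP; rewrite -subr_eq => /eqP ce.
have : (l%:Z %| c)%Z.
  have -> : c = (k_nd F n d)%:Z - ((k_nd F n d)%:Z - c) by rewrite opprB addrCA subrr addr0.
  rewrite ce; apply: rpredB.
    by rewrite dvdzE.
  apply: dvdz_mull; rewrite -[1]/(1%N%:Z) subzn ?expn_gt0 // dvdzE; exact: l1.
rewrite dvdzE => /dvdn_leq; rewrite absz_gt0 c0 => /(_ isT).
by rewrite leqNgt cl.
Qed.
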